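(* Let $\phi_1,\phi_2$ be as in the context and let $\det J=\phi_{1,x}\phi_{2,y}-\phi_{1,y}\phi_{2,x}$ (assumed invertible as a formal series). Then $\phi_1,\phi_2$ satisfy the pre-reduced hierarchy $\big((\det J)^{-1}\,\Phi_1\wedge\Phi_2\big)_-=0$ if and only if for all $n,j\ge1$ $$\partial_{t_n}\vec\phi=\left(\Big((\det J)^{-1}\begin{vmatrix}\phi_{1,t_n}&\phi_{2,t_n}\\ \phi_{1,y}&\phi_{2,y}\end{vmatrix}\Big)_+\partial_x+\Big((\det J)^{-1}\begin{vmatrix}\phi_{2,t_n}&\phi_{1,t_n}\\ \phi_{2,x}&\phi_{1,x}\end{vmatrix}\Big)_+\partial_y\right)\vec\phi,$$ $$\lambda\partial_{z_j}\vec\phi=\left(\Big((\det J)^{-1}\begin{vmatrix}\lambda\phi_{1,z_j}&\lambda\phi_{2,z_j}\\ \phi_{1,y}&\phi_{2,y}\end{vmatrix}\Big)_+\partial_x+\Big((\det J)^{-1}\begin{vmatrix}\lambda\phi_{2,z_j}&\lambda\phi_{1,z_j}\\ \phi_{2,x}&\phi_{1,x}\end{vmatrix}\Big)_+\partial_y\right)\vec\phi.$$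
   Context: Independent variables are $x,y$ and two infinite families $t_1,t_2,\dots$ and $z_1,z_2,\dots$. $\lambda$ is a formal spectral parameter; for a formal Laurent series, $(\cdot)_+$ is the part with nonnegative powers of $\lambda$ and $(\cdot)_-$ the part with negative powers. Consider formal series $\phi_1=-y+\sum_{j\ge2}z_j\lambda^{j-1}+\sum_{k\ge1}g_k\lambda^{-k}$, $\phi_2=x+t_1\lambda+\sum_{n\ge2}t_n\lambda^n+\sum_{m\ge1}f_m\lambda^{-m}$, with $g_k,f_m$ functions of $(x,y,t_1,t_2,\dots,z_1,z_2,\dots)$; $\vec\phi=(\phi_1,\phi_2)^T$ and vector fields act componentwise. Define $\Phi_i=\phi_{i,x}dx+\phi_{i,y}dy+\sum_{n\ge1}\phi_{i,t_n}dt_n+\lambda\sum_{j\ge1}\phi_{i,z_j}dz_j$. The condition $\big((\det J)^{-1}\Phi_1\wedge\Phi_2\big)_-=0$ means: for every pair of variables $a,b$ among $x,y,t_n,z_j$, the negative-power part of $(\det J)^{-1}\lambda^{\epsilon}(\phi_{1,a}\phi_{2,b}-\phi_{1,b}\phi_{2,a})$ vanishes, where $\epsilon$ is the number of $z$-variables among $a,b$. Subscripts denote partial derivatives. *)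

(* Defs.v *)
From HB Require Import structures.
From mathcomp Require Import all_boot all_order all_algebra.
Set Implicit Arguments. Unset Strict Implicit. Unset Printing Implicit Defensive.
Import Order.TTheory GRing.Theory Num.Theory.
Local Open Scope ring_scope.

(* ---------- Formal Laurent series in lambda with finitely many positive
   powers (i.e. elements of A((lambda^{-1}))).  A series is given by an
   upper bound [ltop] on its degree and a raw coefficient function; its
   actual coefficients [coef] are the raw ones truncated above [ltop], so
   every record denotes a genuine element of A((lambda^{-1})). *)
Record lser (A : Type) := LSer { ltop : int; lraw : int -> A }.

Section LaurentSeries.
Variable A : comNzRingType.

Definition coef (s : lser A) (k : int) : A := if k <= ltop s then lraw s k else 0.

Definition lseq (a b : lser A) : Prop := forall k : int, coef a k = coef b k.

Definition lone : lser A := LSer 0 (fun k : int => if k == 0 then 1 else 0).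

Definition ladd (a b : lser A) : lser A :=
  LSer (Num.max (ltop a) (ltop b)) (fun k => coef a k + coef b k).

Definition lopp (a : lser A) : lser A := LSer (ltop a) (fun k => - coef a k).

Definition lsub (a b : lser A) : lser A := ladd a (lopp b).

(* Cauchy product: the coefficient of lambda^k is
   sum_{i + j = k, i <= ltop a, j <= ltop b} a_i b_j (a finite sum). *)
Definition lmul (a b : lser A) : lser A :=
  LSer (ltop a + ltop b)
    (fun k => \sum_(0 <= i < (absz (ltop a + ltop b - k)%R).+1)
                 coef a (ltop a - i%:Z) * coef b (k - ltop a + i%:Z)).

Definition llam (a : lser A) : lser A := LSer (ltop a + 1) (fun k => coef a (k - 1)).

Definition llamn (e : nat) (a : lser A) : lser A := iter e llam a.

Definition lpos (a : lser A) : lser A :=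
  LSer (ltop a) (fun k => if 0 <= k then coef a k else 0).

Definition lneg_zero (a : lser A) : Prop := forall k : int, k < 0 -> coef a k = 0.

Definition det2 (a b c d : lser A) : lser A := lsub (lmul a d) (lmul b c).

End LaurentSeries.

(* ENCODING: [Vt n] is t_{n+1} and [Vz n] is z_{n+1} (n : nat), so every
   constructor denotes exactly one genuine variable. ---------- *)
Inductive var := Vx | Vy | Vt of nat | Vz of nat.

Definition is_zvar (v : var) : nat := if v is Vz _ then 1%N else 0%N.

(* an upper bound on the lambda-degree of d phi_i / d v *)
Definition vdeg (v : var) : int :=
  match v with Vx | Vy => 0 | Vt n => (n.+1)%:Z | Vz n => n%:Z end.

Section Phi.
Variable A : comNzRingType.
(* D v = partial derivative with respect to the variable v acting on the
   coefficient ring A of "functions of (x,y,t,z)"; coord v is the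
   coordinate function v itself. *)
Variable D : var -> A -> A.
Variable coord : var -> A.
(* g k = g_k, f m = f_m for k, m >= 1 (the values g 0, f 0 are never used) *)
Variables g f : nat -> A.

(* phi_1 = -y + sum_{j>=2} z_j lambda^{j-1} + sum_{k>=1} g_k lambda^{-k} *)
Definition phi1c (k : int) : A :=
  if k == 0 then - coord Vy
  else if 0 < k then coord (Vz (absz k))   (* z_{k+1} lambda^k *)
  else g (absz k).

(* phi_2 = x + sum_{n>=1} t_n lambda^n + sum_{m>=1} f_m lambda^{-m} *)
Definition phi2c (k : int) : A :=
  if k == 0 then coord Vx
  else if 0 < k then coord (Vt (absz k).-1) (* t_k lambda^k *)
  else f (absz k).

Definition dphi1 (v : var) : lser A := LSer (vdeg v) (fun k => D v (phi1c k)).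
Definition dphi2 (v : var) : lser A := LSer (vdeg v) (fun k => D v (phi2c k)).

Definition detJ : lser A := det2 (dphi1 Vx) (dphi2 Vx) (dphi1 Vy) (dphi2 Vy).

(* u plays the role of (det J)^{-1} *)
Variable u : lser A.

Definition prereduced_hierarchy : Prop :=
  forall a b : var,
    lneg_zero (lmul u (llamn (is_zvar a + is_zvar b)
                  (lsub (lmul (dphi1 a) (dphi2 b)) (lmul (dphi1 b) (dphi2 a))))).

(* For a vector (p1, p2) (= d_{t_n} phi or lambda d_{z_j} phi), the
   components of
   ( (u |p1 p2; phi1y phi2y|)_+ d_x + (u |p2 p1; phi2x phi1x|)_+ d_y ) phi *)
Definition lax_rhs1 (p1 p2 : lser A) : lser A :=
  ladd (lmul (lpos (lmul u (det2 p1 p2 (dphi1 Vy) (dphi2 Vy)))) (dphi1 Vx))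
       (lmul (lpos (lmul u (det2 p2 p1 (dphi2 Vx) (dphi1 Vx)))) (dphi1 Vy)).
Definition lax_rhs2 (p1 p2 : lser A) : lser A :=
  ladd (lmul (lpos (lmul u (det2 p1 p2 (dphi1 Vy) (dphi2 Vy)))) (dphi2 Vx))
       (lmul (lpos (lmul u (det2 p2 p1 (dphi2 Vx) (dphi1 Vx)))) (dphi2 Vy)).

Definition lax_eq (p1 p2 : lser A) : Prop :=
  lseq p1 (lax_rhs1 p1 p2) /\ lseq p2 (lax_rhs2 p1 p2).

Definition lax_system : Prop :=
  (forall n : nat, lax_eq (dphi1 (Vt n)) (dphi2 (Vt n))) /\
  (forall j : nat, lax_eq (llam (dphi1 (Vz j))) (llam (dphi2 (Vz j)))).

End Phi.

(* Main.v *)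
Require Import Defs.
From HB Require Import structures.
From mathcomp Require Import all_boot all_order all_algebra.
From mathcomp Require Import zify.
From Stdlib Require Import Ring Setoid Morphisms.
Import Order.TTheory GRing.Theory Num.Theory.
Local Open Scope ring_scope.

Section Found.
Variable A : comNzRingType.
Implicit Types a b c : lser A.

Lemma coef_gt a k : ltop a < k -> coef a k = 0.
Proof. by move=> H; rewrite /coef leNgt H. Qed.

Lemma coef_add a b k : coef (ladd a b) k = coef a k + coef b k.
Proof.
rewrite {1}/coef /=; case: ifP => H //.
move/negbT: H; rewrite -ltNge => H.
have H1 : ltop a < k by apply: le_lt_trans H; rewrite le_max lexx.
have H2 : ltop b < k by apply: le_lt_trans H; rewrite le_max lexx orbT.
by rewrite !coef_gt // addr0.
Qed.

Lemma coef_opp a k : coef (lopp a) k = - coef a k.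
Proof. rewrite {1}/coef /=; case: ifP => H //. by rewrite coef_gt ?oppr0 // ltNge H. Qed.

Lemma coef_llam a k : coef (llam a) k = coef a (k - 1).
Proof. rewrite {1}/coef /=; case: ifP => H //. rewrite coef_gt //. move/negbT: H; rewrite -ltNge; lia. Qed.

Lemma coef_lpos a k : coef (lpos a) k = if 0 <= k then coef a k else 0.
Proof. rewrite {1}/coef /=; case: ifP => H //. case: ifP => // _. rewrite coef_gt //. move/negbT: H; rewrite -ltNge; lia. Qed.

Definition mono (d : int) : lser A := LSer d (fun k => if k == d then 1 else 0).

Lemma coef_mono d k : coef (mono d) k = if k == d then 1 else 0.
Proof. rewrite /coef /=; case: ifP => H //. case: eqP => // E. move/negbT: H; rewrite -ltNge; lia. Qed.

Definition wsum (F : int -> A) (hi : int) (n : nat) := \sum_(t < n) F (hi - t%:Z).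

Lemma wsum_extR F p hi n : hi - n%:Z < p -> (forall i, i < p -> F i = 0) ->
  forall e, wsum F hi (n + e) = wsum F hi n.
Proof.
move=> Hv HF; elim=> [|e IH]; first by rewrite addn0.
rewrite addnS /wsum big_ord_recr /= -/(wsum F hi (n + e)) IH HF ?addr0 //; lia.
Qed.

Lemma wsum_extL F q hi n : q <= hi -> (forall i, q < i -> F i = 0) ->
  forall m : nat, wsum F (hi + m%:Z) (n + m) = wsum F hi n.
Proof.
move=> Hv HF; elim=> [|m IH]; first by rewrite addn0 addr0.
rewrite -IH addnS /wsum big_ord_recl /= HF; last lia.
rewrite add0r; apply: eq_bigr => t _; congr F; rewrite /bump /=; lia.
Qed.

Lemma wsum_eq F p q hi n hi' n' :
  (forall i, i < p -> F i = 0) -> (forall i, q < i -> F i = 0) ->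
  q <= hi -> hi - n%:Z < p -> q <= hi' -> hi' - n'%:Z < p ->
  wsum F hi n = wsum F hi' n'.
Proof.
move=> Hp Hq H1 H2 H3 H4.
have [[m Hm]|[m Hm]] : (exists m : nat, hi' = hi + m%:Z) \/ (exists m : nat, hi = hi' + m%:Z).
  case: (lerP hi hi') => H; [left; exists (absz (hi' - hi)) | right; exists (absz (hi - hi'))]; lia.
- rewrite -(@wsum_extL F q hi n H1 Hq m) -Hm.
  rewrite -(@wsum_extR F p hi' (n + m) _ Hp n'); last lia.
  by rewrite -(@wsum_extR F p hi' n' H4 Hp (n + m)) addnC.
- rewrite -(@wsum_extL F q hi' n' H3 Hq m) -Hm.
  rewrite -(@wsum_extR F p hi (n' + m) _ Hp n); last lia.
  by rewrite -(@wsum_extR F p hi n H2 Hp (n' + m)) addnC.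
Qed.

Definition cterm a b k := fun i => coef a i * coef b (k - i).

Lemma coef_lmul a b k hi n : ltop a <= hi -> hi - n%:Z < k - ltop b ->
  coef (lmul a b) k = wsum (cterm a b k) hi n.
Proof.
move=> H1 H2.
have Hp : forall i, i < k - ltop b -> cterm a b k i = 0.
  by move=> i Hi; rewrite /cterm (@coef_gt b) ?mulr0 //; lia.
have Hq : forall i, ltop a < i -> cterm a b k i = 0.
  by move=> i Hi; rewrite /cterm coef_gt ?mul0r.
rewrite (@wsum_eq _ _ _ _ _ (ltop a) (absz (ltop a + ltop b - k)%R).+1 Hp Hq H1 H2) ?lexx //; last lia.
rewrite /coef /=; case: ifP => H.
  rewrite big_mkord; apply: eq_bigr => t _; rewrite /cterm; congr (_ * coef b _); lia.
rewrite /wsum big1 // => t _; rewrite /cterm (@coef_gt b) ?mulr0 //.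
move/negbT: H; rewrite -ltNge; lia.
Qed.

Lemma big_n (x y : int) : exists n : nat, forall n', (n <= n')%N -> x - n'%:Z < y.
Proof. exists (absz (x - y)).+1 => n' Hn; lia. Qed.

Lemma ub (x y : int) : exists z, x <= z /\ y <= z.
Proof. case: (lerP x y) => H; [exists y | exists x]; lia. Qed.

Definition lzero : lser A := LSer 0 (fun _ => 0).
Lemma coef_lzero k : coef lzero k = 0.
Proof. by rewrite /coef /=; case: ifP. Qed.

Lemma lseq_set : Setoid_Theory (lser A) (@lseq A).
Proof. split. by move=> x k. by move=> x y H k. by move=> x y z H1 H2 k; rewrite H1 H2. Qed.

Lemma lmul_morph a a' b b' : lseq a a' -> lseq b b' -> lseq (lmul a b) (lmul a' b').
Proof.
move=> Ha Hb k.
have [hi [H1 H2]] := ub (ltop a) (ltop a').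
have [n1 Hn1] := big_n hi (k - ltop b).
have [n2 Hn2] := big_n hi (k - ltop b').
rewrite (@coef_lmul a b k hi (n1 + n2)) ?(@coef_lmul a' b' k hi (n1 + n2)) //;
  try (apply: Hn1 || apply: Hn2); rewrite ?leq_addr ?leq_addl //.
by apply: eq_bigr => t _; rewrite /cterm Ha Hb.
Qed.

Lemma ring_ext : ring_eq_ext (@ladd A) (@lmul A) (@lopp A) (@lseq A).
Proof.
split.
- by move=> x y H x' y' H' k; rewrite !coef_add H H'.
- by move=> x y H x' y' H'; apply: lmul_morph.
- by move=> x y H k; rewrite !coef_opp H.
Qed.

Lemma lmulC a b : lseq (lmul a b) (lmul b a).
Proof.
move=> k.
have [n Hn] := big_n (ltop a) (k - ltop b).
rewrite (@coef_lmul a b k (ltop a) n) ?lexx ?Hn //.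
rewrite (@coef_lmul b a k (k - ltop a + n%:Z - 1) n); last lia; last first.
  by have := Hn n (leqnn n); lia.
rewrite /wsum (reindex_inj rev_ord_inj) /=; apply: eq_bigr => t _.
rewrite /cterm mulrC; have := ltn_ord t; move=> Ht.
by congr (coef _ _ * coef _ _); lia.
Qed.

Lemma lmulA a b c : lseq (lmul a (lmul b c)) (lmul (lmul a b) c).
Proof.
move=> k.
set ta := ltop a; set tb := ltop b; set tc := ltop c.
have [n Hn] := big_n (ta + tb) (k - tc).
have [m1 Hm1] := big_n ta (ta + tb - n%:Z - tb).
have [m2 Hm2] := big_n ta (k - (tb + tc)).
have Hn' := Hn n (leqnn n).
have Hm1' := Hm1 (m1 + m2)%N (leq_addr _ _).
have Hm2' := Hm2 (m1 + m2)%N (leq_addl _ _).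
rewrite (@coef_lmul a (lmul b c) k ta (m1 + m2)) ?lexx //.
rewrite (@coef_lmul (lmul a b) c k (ta + tb) n) ?lexx //.
have E : forall s : 'I_n, cterm (lmul a b) c k (ta + tb - s%:Z) =
   \sum_(t < m1 + m2) coef a (ta - t%:Z) * coef b (ta + tb - s%:Z - (ta - t%:Z)) * coef c (k - (ta + tb - s%:Z)).
  move=> s; rewrite /cterm (@coef_lmul a b _ ta (m1 + m2)) ?lexx //; last first.
    by have := ltn_ord s; lia.
  by rewrite /wsum mulr_suml; apply: eq_bigr => t _; rewrite /cterm.
rewrite /wsum (eq_bigr _ (fun s _ => E s)) exchange_big /=.
apply: eq_bigr => t _.
rewrite /cterm (@coef_lmul b c _ (tb + t%:Z) n) /=; [|lia|lia].
rewrite /wsum mulr_sumr; apply: eq_bigr => s _.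
rewrite /cterm mulrA; congr (_ * coef _ _ * coef _ _); lia.
Qed.

Lemma lmulDl a b c : lseq (lmul (ladd a b) c) (ladd (lmul a c) (lmul b c)).
Proof.
move=> k; rewrite coef_add.
have [n Hn] := big_n (ltop (ladd a b)) (k - ltop c).
have Hn' := Hn n (leqnn n).
have Ha : ltop a <= ltop (ladd a b) by rewrite /= le_max lexx.
have Hb : ltop b <= ltop (ladd a b) by rewrite /= le_max lexx orbT.
rewrite (@coef_lmul (ladd a b) c k (ltop (ladd a b)) n) ?lexx // (@coef_lmul a c k (ltop (ladd a b)) n) //.
rewrite (@coef_lmul b c k (ltop (ladd a b)) n) // /wsum -big_split /=.
by apply: eq_bigr => t _; rewrite /cterm coef_add mulrDl.
Qed.

Lemma coef_mono_mul d a k : coef (lmul (mono d) a) k = coef a (k - d).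
Proof.
have [n Hn] := big_n d (k - ltop a).
rewrite (@coef_lmul (mono d) a k d n.+1) ?lexx //=; last by apply: Hn.
rewrite /wsum big_ord_recl /= big1 ?addr0.
  by rewrite /cterm coef_mono; case: eqP => H; [rewrite mul1r; congr coef; lia | lia].
by move=> t _; rewrite /cterm coef_mono; case: eqP; [rewrite /bump /=; lia | rewrite mul0r].
Qed.

Lemma lring : ring_theory lzero (lone A) (@ladd A) (@lmul A) (@lsub A) (@lopp A) (@lseq A).
Proof.
split.
- by move=> x k; rewrite coef_add coef_lzero add0r.
- by move=> x y k; rewrite !coef_add addrC.
- by move=> x y z k; rewrite !coef_add addrA.
- move=> x k. rewrite (_ : lone A = mono 0) // coef_mono_mul subr0 //.
- exact: lmulC.
- exact: lmulA.
- exact: lmulDl.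
- by move=> x y k.
- by move=> x k; rewrite coef_add coef_opp coef_lzero addrN.
Qed.

Add Ring lserR : lring (setoid lseq_set ring_ext).

Global Instance lseq_equiv : Equivalence (@lseq A).
Proof. split. by move=> x k. by move=> x y H k. by move=> x y z H1 H2 k; rewrite H1 H2. Qed.
Global Instance ladd_prop : Proper (@lseq A ==> @lseq A ==> @lseq A) (@ladd A).
Proof. by move=> x y H x' y' H' k; rewrite !coef_add H H'. Qed.
Global Instance lmul_prop : Proper (@lseq A ==> @lseq A ==> @lseq A) (@lmul A).
Proof. by move=> x y H x' y' H'; apply: lmul_morph. Qed.
Global Instance lopp_prop : Proper (@lseq A ==> @lseq A) (@lopp A).
Proof. by move=> x y H k; rewrite !coef_opp H. Qed.
Global Instance lsub_prop : Proper (@lseq A ==> @lseq A ==> @lseq A) (@lsub A).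
Proof. by move=> x y H x' y' H' k; rewrite /lsub !coef_add !coef_opp H H'. Qed.
Global Instance lneg_prop : Proper (@lseq A ==> iff) (@lneg_zero A).
Proof. move=> x y H; split=> H1 k Hk; [rewrite -(H k) | rewrite (H k)]; exact: H1. Qed.

Lemma lpos_id a : lneg_zero a -> lseq (lpos a) a.
Proof. move=> H k; rewrite coef_lpos; case: ifP => // Hk; rewrite H //; move/negbT: Hk; lia. Qed.

Lemma lneg_lpos a : lneg_zero (lpos a).
Proof. move=> k Hk; rewrite coef_lpos; case: ifP => //; lia. Qed.
Lemma lneg_one : lneg_zero (lone A).
Proof. move=> k Hk; rewrite (_ : lone A = mono 0) // coef_mono; case: eqP => //; lia. Qed.
Lemma lneg_zero0 : lneg_zero lzero.
Proof. by move=> k _; rewrite coef_lzero. Qed.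
Lemma lneg_add a b : lneg_zero a -> lneg_zero b -> lneg_zero (ladd a b).
Proof. by move=> Ha Hb k Hk; rewrite coef_add Ha ?Hb ?addr0. Qed.
Lemma lneg_opp a : lneg_zero a -> lneg_zero (lopp a).
Proof. by move=> Ha k Hk; rewrite coef_opp Ha ?oppr0. Qed.
Lemma lneg_sub a b : lneg_zero a -> lneg_zero b -> lneg_zero (lsub a b).
Proof. by move=> Ha Hb; apply: lneg_add => //; apply: lneg_opp. Qed.
Lemma lneg_mul a b : lneg_zero a -> lneg_zero b -> lneg_zero (lmul a b).
Proof.
move=> Ha Hb k Hk.
have [n Hn] := big_n (ltop a) (k - ltop b).
rewrite (@coef_lmul a b k (ltop a) n) ?lexx ?Hn // /wsum big1 // => t _.
rewrite /cterm; case: (ltrP (ltop a - t%:Z) 0) => H.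
  by rewrite Ha ?mul0r.
by rewrite Hb ?mulr0 //; lia.
Qed.

Fixpoint lpow (e : nat) : lser A := if e is e'.+1 then lmul (mono 1) (lpow e') else lone A.

Lemma llam_mono a : lseq (llam a) (lmul (mono 1) a).
Proof. by move=> k; rewrite coef_llam coef_mono_mul. Qed.

Lemma llamn_lpow e a : lseq (llamn e a) (lmul (lpow e) a).
Proof.
elim: e => [|e IH].
  change (lseq a (lmul (lone A) a)); ring.
change (lseq (llam (llamn e a)) (lmul (lmul (mono 1) (lpow e)) a)).
rewrite llam_mono IH; ring.
Qed.

Lemma lpow_add e1 e2 : lseq (lpow (e1 + e2)) (lmul (lpow e1) (lpow e2)).
Proof.
elim: e1 => [|e IH]; first by change (lseq (lpow e2) (lmul (lone A) (lpow e2))); ring.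
change (lseq (lmul (mono 1) (lpow (e + e2))) (lmul (lmul (mono 1) (lpow e)) (lpow e2))).
rewrite IH; ring.
Qed.

Lemma lneg_lpow e : lneg_zero (lpow e).
Proof. elim: e => [|e IH] /=; first exact: lneg_one. apply: lneg_mul => // k Hk; rewrite coef_mono; case: eqP => //; lia. Qed.

Lemma lneg_eq a b : lseq a b -> lneg_zero a -> lneg_zero b.
Proof. by move=> H H1 k Hk; rewrite -(H k); apply: H1. Qed.

Lemma fwd (X1 X2 Y1 Y2 u : lser A) (Hu : lseq (lmul u (det2 X1 X2 Y1 Y2)) (lone A)) e q1 q2 :
 lneg_zero (lmul u (llamn e (lsub (lmul q1 Y2) (lmul Y1 q2)))) ->
 lneg_zero (lmul u (llamn e (lsub (lmul q1 X2) (lmul X1 q2)))) ->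
 lseq (llamn e q1) (ladd (lmul (lpos (lmul u (det2 (llamn e q1) (llamn e q2) Y1 Y2))) X1)
                        (lmul (lpos (lmul u (det2 (llamn e q2) (llamn e q1) X2 X1))) Y1)) /\
 lseq (llamn e q2) (ladd (lmul (lpos (lmul u (det2 (llamn e q1) (llamn e q2) Y1 Y2))) X2)
                        (lmul (lpos (lmul u (det2 (llamn e q2) (llamn e q1) X2 X1))) Y2)).
Proof.
move=> H1 H2.
have HM : lseq (lpos (lmul u (det2 (llamn e q1) (llamn e q2) Y1 Y2)))
               (lmul u (det2 (llamn e q1) (llamn e q2) Y1 Y2)).
  apply: lpos_id; apply: (@lneg_eq _ _ _ H1); rewrite /det2 !llamn_lpow; ring.
have HN : lseq (lpos (lmul u (det2 (llamn e q2) (llamn e q1) X2 X1)))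
               (lmul u (det2 (llamn e q2) (llamn e q1) X2 X1)).
  apply: lpos_id; apply: (@lneg_eq _ _ _ (@lneg_opp _ H2)); rewrite /det2 !llamn_lpow; ring.
rewrite HM HN; split.
- transitivity (lmul (llamn e q1) (lmul u (det2 X1 X2 Y1 Y2))); first by rewrite Hu; ring.
  rewrite /det2; ring.
- transitivity (lmul (llamn e q2) (lmul u (det2 X1 X2 Y1 Y2))); first by rewrite Hu; ring.
  rewrite /det2; ring.
Qed.

Lemma bwd (X1 X2 Y1 Y2 u : lser A) (Hu : lseq (lmul u (det2 X1 X2 Y1 Y2)) (lone A))
  p1 p2 r1 r2 P Q P' Q' :
  lneg_zero P -> lneg_zero Q -> lneg_zero P' -> lneg_zero Q' ->
  lseq p1 (ladd (lmul P X1) (lmul Q Y1)) -> lseq p2 (ladd (lmul P X2) (lmul Q Y2)) ->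
  lseq r1 (ladd (lmul P' X1) (lmul Q' Y1)) -> lseq r2 (ladd (lmul P' X2) (lmul Q' Y2)) ->
  lneg_zero (lmul u (lsub (lmul p1 r2) (lmul r1 p2))).
Proof.
move=> HP HQ HP' HQ' E1 E2 E3 E4.
rewrite E1 E2 E3 E4.
apply: (@lneg_eq (lsub (lmul P Q') (lmul P' Q))).
  transitivity (lmul (lsub (lmul P Q') (lmul P' Q)) (lmul u (det2 X1 X2 Y1 Y2))); first by rewrite Hu; ring.
  rewrite /det2; ring.
by apply: lneg_sub; apply: lneg_mul.
Qed.

Lemma main_gen (D : var -> A -> A) (coord : var -> A) (g f : nat -> A)
  (u : lser A) (Hu : lseq (lmul u (detJ D coord g f)) (lone A)) :
  prereduced_hierarchy D coord g f u <-> lax_system D coord g f u.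
Proof.
rewrite /detJ in Hu.
set X1 := dphi1 D coord g Vx in Hu *; set X2 := dphi2 D coord f Vx in Hu *.
set Y1 := dphi1 D coord g Vy in Hu *; set Y2 := dphi2 D coord f Vy in Hu *.
split.
- move=> H; split.
  + move=> n; exact: (@fwd X1 X2 Y1 Y2 u Hu 0 _ _ (H (Vt n) Vy) (H (Vt n) Vx)).
  + move=> n; exact: (@fwd X1 X2 Y1 Y2 u Hu 1 _ _ (H (Vz n) Vy) (H (Vz n) Vx)).
- case=> Ht Hz.
  have dec : forall v, exists P Q, [/\ lneg_zero P, lneg_zero Q,
     lseq (lmul (lpow (is_zvar v)) (dphi1 D coord g v)) (ladd (lmul P X1) (lmul Q Y1)) &
     lseq (lmul (lpow (is_zvar v)) (dphi2 D coord f v)) (ladd (lmul P X2) (lmul Q Y2))].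
    case=> [||n|n].
    * exists (lone A), lzero; split; [exact: lneg_one | exact: lneg_zero0 | |];
        rewrite (_ : lpow (is_zvar Vx) = lone A) // /X1 /X2 /Y1 /Y2; ring.
    * exists lzero, (lone A); split; [exact: lneg_zero0 | exact: lneg_one | |];
        rewrite (_ : lpow (is_zvar Vy) = lone A) // /X1 /X2 /Y1 /Y2; ring.
    * have [E1 E2] := Ht n.
      exists (lpos (lmul u (det2 (dphi1 D coord g (Vt n)) (dphi2 D coord f (Vt n)) Y1 Y2))).
      exists (lpos (lmul u (det2 (dphi2 D coord f (Vt n)) (dphi1 D coord g (Vt n)) X2 X1))). split; [exact: lneg_lpos | exact: lneg_lpos | |].
      - rewrite (_ : lpow (is_zvar (Vt n)) = lone A) //.
        transitivity (dphi1 D coord g (Vt n)); first ring. exact E1.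
      - rewrite (_ : lpow (is_zvar (Vt n)) = lone A) //.
        transitivity (dphi2 D coord f (Vt n)); first ring. exact E2.
    * have [E1 E2] := Hz n.
      exists (lpos (lmul u (det2 (llam (dphi1 D coord g (Vz n))) (llam (dphi2 D coord f (Vz n))) Y1 Y2))).
      exists (lpos (lmul u (det2 (llam (dphi2 D coord f (Vz n))) (llam (dphi1 D coord g (Vz n))) X2 X1))). split; [exact: lneg_lpos | exact: lneg_lpos | |].
      - change (is_zvar (Vz n)) with 1%N; rewrite -(llamn_lpow 1). exact E1.
      - change (is_zvar (Vz n)) with 1%N; rewrite -(llamn_lpow 1). exact E2.
  move=> a b.
  have [P [Q [HP HQ Ea1 Ea2]]] := dec a.
  have [P' [Q' [HP' HQ' Eb1 Eb2]]] := dec b.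
  have := @bwd X1 X2 Y1 Y2 u Hu _ _ _ _ _ _ _ _ HP HQ HP' HQ' Ea1 Ea2 Eb1 Eb2.
  apply: lneg_eq; rewrite llamn_lpow lpow_add; ring.
Qed.

End Found.

Theorem theorem4p1 (A : comNzRingType) (D : var -> A -> A) (coord : var -> A)
  (g f : nat -> A)
  (HDadd : forall v a b, D v (a + b) = D v a + D v b)
  (HDmul : forall v a b, D v (a * b) = D v a * b + a * D v b)
  (HDcomm : forall v w a, D v (D w a) = D w (D v a))
  (Hcoord1 : forall v, D v (coord v) = 1)
  (Hcoord0 : forall v w, v <> w -> D v (coord w) = 0)
  (u : lser A) (Hu : lseq (lmul u (detJ D coord g f)) (lone A)) :
  prereduced_hierarchy D coord g f u <-> lax_system D coord g f u.
Proof. exact: (@main_gen A D coord g f u Hu). Qed.
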